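(* Let $p$ be a seminorm on $\mathbb{R}^d$ and let $T:\mathbb{R}^d\to\mathbb{R}^d$ be a $\gamma$-contraction mapping with respect to $p$, i.e. there is $\gamma\in[0,1)$ with $p(T(x)-T(y))\le \gamma\, p(x-y)$ for all $x,y\in\mathbb{R}^d$. Then there exists $x^*\in\mathbb{R}^d$ such that $p(T(x^* )-x^* )=0$. In addition, for any $x_0\in\mathbb{R}^d$, the sequence $\{x_k\}$ generated by $x_{k+1}=T(x_k)$ satisfies $$p(x_k-x^* )\le \gamma^k\, p(x_0-x^* )\quad\text{for all } k\ge 0.$$
   Context: A seminorm on $\mathbb{R}^d$ is a function $p:\mathbb{R}^d\to[0,\infty)$ with $p(\alpha x)=|\alpha|p(x)$ and $p(x+y)\le p(x)+p(y)$ for all $x,y\in\mathbb{R}^d$, $\alpha\in\mathbb{R}$ (it need not satisfy $p(x)=0\Rightarrow x=0$). *)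

(* Defs.v *)
From mathcomp Require Import all_boot all_order all_algebra.
From mathcomp Require Import reals.
Set Implicit Arguments. Unset Strict Implicit. Unset Printing Implicit Defensive.
Import Order.TTheory GRing.Theory Num.Theory.
Local Open Scope ring_scope.

Definition seminorm (R : realType) (d : nat) (p : 'rV[R]_d -> R) : Prop :=
  [/\ forall x, 0 <= p x,
      forall (a : R) x, p (a *: x) = `|a| * p x
    & forall x y, p (x + y) <= p x + p y].

Definition contraction_wrt (R : realType) (d : nat) (p : 'rV[R]_d -> R)
    (gamma : R) (T : 'rV[R]_d -> 'rV[R]_d) : Prop :=
  0 <= gamma /\ gamma < 1 /\ forall x y, p (T x - T y) <= gamma * p (x - y).

(* Main.v *)
Require Import Defs.
From mathcomp Require Import all_boot all_order all_algebra.
From mathcomp Require Import classical_sets reals ring lra.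
From Stdlib Require Import Classical ClassicalEpsilon.
Set Implicit Arguments. Unset Strict Implicit.
Import Order.TTheory GRing.Theory Num.Theory.
Local Open Scope ring_scope.
Section Real.
Variable R : realType.

Lemma bern (h : R) n : 0 <= h -> 1 + n%:R * h <= (1 + h) ^+ n.
Proof.
move=> h0; elim: n => [|n IH]; first by rewrite mul0r addr0 expr0.
rewrite exprS -natr1 mulrDl mul1r.
apply: le_trans (_ : (1 + h) * (1 + n%:R * h) <= _); last first.
  by rewrite ler_pM2l ?IH // (lt_le_trans ltr01) // lerDl.
have : 0 <= n%:R * h * h by rewrite !mulr_ge0.
nra.
Qed.

Lemma geo_zero (c D r : R) : 0 <= c -> 0 <= r < 1 ->
  (forall n, c <= D * r ^+ n) -> c = 0.
Proof.
move=> c0 /andP[r0 r1] H.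
have [r00|rn0] := eqVneq r 0.
  by apply/eqP; rewrite eq_le c0 andbT; have := H 1%N; rewrite expr1 r00 mulr0.
have rp : 0 < r by rewrite lt_def rn0.
apply/eqP; rewrite eq_le c0 andbT; rewrite leNgt; apply/negP => cp.
set h := r^-1 - 1.
have hp : 0 < h by rewrite subr_gt0 invf_gt1.
have D0 : 0 <= D.
  have := H 0%N; rewrite expr0 mulr1 => /(le_trans c0) //.
set n := Num.Def.archi_bound (D / (c * h)).
have := @archi_boundP _ (D / (c * h)) (divr_ge0 D0 (mulr_ge0 c0 (ltW hp))).
rewrite -/n ltr_pdivrMr ?mulr_gt0 // => Hn.
have := H n.
have e : r = (1 + h)^-1 by rewrite /h addrC subrK invrK.
rewrite e exprVn ler_pdivlMr; last by rewrite exprn_gt0 // (lt_le_trans ltr01) // lerDl ltW.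
move=> Hc.
have B : 1 + n%:R * h <= (1 + h) ^+ n by apply: bern; exact: ltW.
have : c * (1 + n%:R * h) <= c * (1 + h) ^+ n by rewrite ler_pM2l.
nra.
Qed.

Lemma real_lim (a : nat -> R) C r : 0 <= C -> 0 <= r < 1 ->
  (forall n, `|a n.+1 - a n| <= C * r ^+ n) ->
  exists L K, forall n, `|a n - L| <= K * r ^+ n.
Proof.
move=> C0 /andP[r0 r1] H.
set K := C / (1 - r).
have r1p : 0 < 1 - r by rewrite subr_gt0.
have CK : C = K * (1 - r) by rewrite /K divfK // gt_eqF.
have K0 : 0 <= K by rewrite /K divr_ge0 // ltW.
have Kr : forall n, 0 <= K * r ^+ n by move=> n; rewrite mulr_ge0 // exprn_ge0.
have tele : forall n k, `|a (n + k)%N - a n| <= K * (r ^+ n - r ^+ (n + k)).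
  move=> n; elim=> [|k IH]; first by rewrite addn0 subrr normr0 subrr mulr0.
  rewrite addnS.
  have := H (n + k)%N; rewrite CK => Hs.
  have tr := ler_normD (a (n + k).+1 - a (n + k)%N) (a (n + k)%N - a n).
  rewrite addrA subrK in tr.
  apply: le_trans tr _.
  rewrite exprS; apply: le_trans (lerD Hs IH) _.
  rewrite le_eqVlt; apply/orP; left; apply/eqP; ring.
have bnd : forall m n, a m - K * r ^+ m <= a n + K * r ^+ n.
  move=> m n; have [mn|nm] := leqP m n.
    have := tele m (n - m)%N; rewrite subnKC // => T.
    have := Kr n; move: T; rewrite ler_norml; case/andP => T1 T2; lra.
  have := tele n (m - n)%N; rewrite subnKC; last exact: ltnW.
  move=> T.
  have := Kr m; move: T; rewrite ler_norml; case/andP => T1 T2; lra.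
pose E := [set y | exists m, y = a m - K * r ^+ m]%classic.
have hub : has_ubound E.
  by exists (a 0%N + K * r ^+ 0) => y [m ->]; apply: bnd.
exists (sup E), K => n.
have l1 : a n - K * r ^+ n <= sup E by apply: ub_le_sup => //; exists n.
have l2 : sup E <= a n + K * r ^+ n.
  apply: ge_sup; first by exists (a 0%N - K * r ^+ 0); exists 0%N.
  by move=> y [m ->]; apply: bnd.
rewrite ler_norml; apply/andP; split; lra.
Qed.
End Real.
Section Semi.
Variables (R : realType) (d : nat) (p : 'rV[R]_d -> R).
Hypothesis hp : seminorm p.
Local Notation V := 'rV[R]_d.

Lemma p_ge0 x : 0 <= p x. Proof. by case: hp. Qed.
Lemma pZ a x : p (a *: x) = `|a| * p x. Proof. by case: hp. Qed.
Lemma pD x y : p (x + y) <= p x + p y. Proof. by case: hp. Qed.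
Lemma p0 : p 0 = 0.
Proof. by rewrite -(scale0r (0 : V)) pZ normr0 mul0r. Qed.
Lemma pN x : p (- x) = p x.
Proof. by rewrite -scaleN1r pZ normrN normr1 mul1r. Qed.
Lemma pB x y : p (x - y) = p (y - x).
Proof. by rewrite -pN opprB. Qed.
Lemma ptri x y z : p (x - z) <= p (x - y) + p (y - z).
Proof. by have := pD (x - y) (y - z); rewrite addrA subrK. Qed.

Fixpoint insp (s : seq V) (y : V) : Prop :=
  match s with
  | [::] => y = 0
  | v :: s' => exists a z, insp s' z /\ y = a *: v + z
  end.

Lemma insp_lin s a y z : insp s y -> insp s z -> insp s (a *: y + z).
Proof.
elim: s y z => [|v s IH] y z /=; first by move=> -> ->; rewrite scaler0 addr0.
move=> [b [y' [Hy ->]]] [c [z' [Hz ->]]].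
exists (a * b + c), (a *: y' + z'); split; first exact: IH.
rewrite scalerDr scalerDl scalerA.
by rewrite -!addrA; congr (_ + _); rewrite addrCA.
Qed.

Lemma insp0 s : insp s 0.
Proof. by elim: s => [|v s IH] //=; exists 0, 0; rewrite scale0r addr0. Qed.

Lemma inspZ s a y : insp s y -> insp s (a *: y).
Proof. by move=> Hy; rewrite -[_ *: _]addr0; apply: insp_lin => //; apply: insp0. Qed.

Lemma inspB s y z : insp s y -> insp s z -> insp s (y - z).
Proof. by move=> Hy Hz; rewrite addrC -scaleN1r; apply: insp_lin. Qed.

Lemma inspD s y z : insp s y -> insp s z -> insp s (y + z).
Proof. by move=> Hy Hz; rewrite -[y]scale1r; apply: insp_lin. Qed.


Lemma key_lb s v (eps : R) : 0 < eps -> (forall z, insp s z -> eps <= p (v - z)) ->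
  forall b z, insp s z -> `|b| * eps <= p (b *: v + z).
Proof.
move=> e0 He b z Hz.
have [->|bn0] := eqVneq b 0; first by rewrite normr0 mul0r p_ge0.
have -> : b *: v + z = b *: (v - (- b^-1) *: z).
  by rewrite scalerDr scaleNr opprK scalerA divff // scale1r.
rewrite pZ ler_pM2l ?normr_gt0 //; apply: He; exact: inspZ.
Qed.

Lemma compl s : forall (x : nat -> V) C r, 0 <= C -> 0 <= r < 1 ->
  (forall n, insp s (x n)) -> (forall n, p (x n.+1 - x n) <= C * r ^+ n) ->
  exists y, insp s y /\ exists D, forall n, p (x n - y) <= D * r ^+ n.
Proof.
elim: s => [|v s IH] x C r C0 r01 Hx Hc.
  exists 0; split => //; exists 0 => n; rewrite (Hx n) subrr p0 mul0r //.
have Hx' : forall n, exists az : R * V, insp s az.2 /\ x n = az.1 *: v + az.2.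
  by move=> n; have [a [z [H1 H2]]] := Hx n; exists (a, z).
pose f n := proj1_sig (constructive_indefinite_description _ (Hx' n)).
have Hf : forall n, insp s (f n).2 /\ x n = (f n).1 *: v + (f n).2.
  by move=> n; rewrite /f; case: constructive_indefinite_description.
pose a n := (f n).1; pose w n := (f n).2.
have Hw : forall n, insp s (w n) by move=> n; case: (Hf n).
have Ex : forall n, x n = a n *: v + w n by move=> n; case: (Hf n).
have r0 : 0 <= r by case/andP: r01.
have Dx : forall n m, x n - x m = (a n - a m) *: v + (w n - w m).
  move=> n m; rewrite !Ex scalerBl opprD !addrA; congr (_ + _).
  by rewrite -!addrA; congr (_ + _); rewrite addrC.
case: (classic (exists eps : R, 0 < eps /\ forall z, insp s z -> eps <= p (v - z))).
  move=> [eps [e0 He]].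
  have KL := key_lb e0 He.
  have Ha : forall n, `|a n.+1 - a n| <= (C / eps) * r ^+ n.
    move=> n; have := KL (a n.+1 - a n) _ (inspB (Hw n.+1) (Hw n)).
    rewrite -Dx => H1; have := le_trans H1 (Hc n).
    by rewrite -ler_pdivlMr // mulrAC.
  have [L [K HL]] := real_lim (divr_ge0 C0 (ltW e0)) r01 Ha.
  have Hw' : forall n, p (w n.+1 - w n) <= (C + C / eps * p v) * r ^+ n.
    move=> n.
    have -> : w n.+1 - w n = (x n.+1 - x n) + (- (a n.+1 - a n) *: v).
      by rewrite Dx scaleNr addrAC subrr add0r.
    apply: le_trans (pD _ _) _; rewrite pZ normrN mulrDl.
    apply: lerD; first exact: Hc.
    by rewrite mulrAC; apply: ler_wpM2r; [exact: p_ge0 | exact: Ha].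
  have [wy [Hwy [D HD]]] := IH w _ r (addr_ge0 C0 (mulr_ge0 (divr_ge0 C0 (ltW e0)) (p_ge0 v))) r01 Hw Hw'.
  exists (L *: v + wy); split; first by exists L, wy.
  exists (K * p v + D) => n.
  have -> : x n - (L *: v + wy) = (a n - L) *: v + (w n - wy).
    rewrite Ex scalerBl opprD !addrA; congr (_ + _).
    by rewrite -!addrA; congr (_ + _); rewrite addrC.
  apply: le_trans (pD _ _) _; rewrite pZ mulrDl; apply: lerD; last exact: HD.
  by rewrite mulrAC; apply: ler_wpM2r; [exact: p_ge0 | exact: HL].
move=> Hne.
have Hz : forall n : nat, exists z, insp s z /\ p (v - z) < 2^-1 ^+ n.
  move=> n; apply: NNPP => Hn; apply: Hne; exists (2^-1 ^+ n); split.
    by rewrite exprn_gt0 // invr_gt0.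
  move=> z Hz; rewrite leNgt; apply/negP => Hlt; apply: Hn; by exists z.
pose g n := proj1_sig (constructive_indefinite_description _ (Hz n)).
have Hg : forall n, insp s (g n) /\ p (v - g n) < 2^-1 ^+ n.
  by move=> n; rewrite /g; case: constructive_indefinite_description.
have h01 : 0 <= (2^-1 : R) < 1 by apply/andP; split; lra.
have Hg' : forall n, p (g n.+1 - g n) <= 2 * 2^-1 ^+ n.
  move=> n; apply: le_trans (ptri _ (v) _) _.
  rewrite pB; have [_ H1] := Hg n; have [_ H2] := Hg n.+1.
  rewrite exprS in H2.
  have : 0 <= (2^-1 : R) ^+ n by rewrite exprn_ge0 // invr_ge0.
  lra.
have [zs [Hzs [Dz HDz]]] := IH g 2 _ (ler0n _ 2) h01 (fun n => proj1 (Hg n)) Hg'.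
have pvz : p (v - zs) = 0.
  apply: (@geo_zero _ _ (1 + Dz) (2^-1)) => //; first exact: p_ge0.
  move=> n; apply: le_trans (ptri _ (g n) _) _.
  have [_ H1] := Hg n; have := HDz n; lra.
pose x' n := a n *: zs + w n.
have Hx'' : forall n, insp s (x' n) by move=> n; apply: insp_lin.
have Ee : forall n, p (x n - x' n) = 0.
  move=> n; by rewrite Ex /x' opprD addrACA subrr addr0 -scalerBr pZ pvz mulr0.
have Hc' : forall n, p (x' n.+1 - x' n) <= C * r ^+ n.
  move=> n; apply: le_trans (ptri _ (x n.+1) _) _.
  rewrite pB Ee add0r; apply: le_trans (ptri _ (x n) _) _.
  by rewrite Ee addr0.
have [y [Hy [D HD]]] := IH x' C r C0 r01 Hx'' Hc'.
exists y; split; first by exists 0, y; rewrite scale0r add0r.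
exists D => n; apply: le_trans (ptri _ (x' n) _) _.
by rewrite Ee add0r.
Qed.
End Semi.

Lemma insp_all (R : realType) (d : nat) (u : 'rV[R]_d) :
  insp [seq delta_mx 0 j | j <- index_enum 'I_d] u.
Proof.
rewrite [u]row_sum_delta.
elim: (index_enum 'I_d) => [|j l IH]; first by rewrite big_nil.
rewrite big_cons /=; exists (u 0 j), (\sum_(i <- l) u 0 i *: delta_mx 0 i); split => //.
Qed.

Unset Implicit Arguments.

Theorem theorem1 (R : realType) (d : nat) (p : 'rV[R]_d -> R)
    (T : 'rV[R]_d -> 'rV[R]_d) (gamma : R) :
  seminorm p -> contraction_wrt p gamma T ->
  exists xs : 'rV[R]_d,
    p (T xs - xs) = 0 /\
    forall (x0 : 'rV[R]_d) (k : nat),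
      p (iter k T x0 - xs) <= gamma ^+ k * p (x0 - xs).
Proof.
move=> hp [g0 [g1 Hc]].
pose x n := iter n T 0.
have g01 : 0 <= gamma < 1 by apply/andP.
have Hx : forall n, p (x n.+1 - x n) <= p (x 1%N - x 0%N) * gamma ^+ n.
  elim=> [|n IH]; first by rewrite expr0 mulr1.
  apply: le_trans (Hc _ _) _.
  rewrite exprS mulrCA; apply: ler_wpM2l => //.
have [xs [_ [D HD]]] := compl hp (p_ge0 hp _) g01 (fun n => insp_all (x n)) Hx.
have fix0 : p (T xs - xs) = 0.
  apply: (@geo_zero _ _ (gamma * D + D * gamma) gamma) => //; first exact: p_ge0.
  move=> n; apply: le_trans (ptri hp _ (x n.+1) _) _.
  have H1 : p (T xs - x n.+1) <= gamma * (D * gamma ^+ n).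
    apply: le_trans (Hc _ _) _; rewrite pB //; apply: ler_wpM2l => //.
  have H2 := HD n.+1; rewrite exprS in H2.
  have -> : (gamma * D + D * gamma) * gamma ^+ n = gamma * (D * gamma ^+ n) + D * (gamma * gamma ^+ n).
    by rewrite mulrDl !mulrA.
  exact: lerD.
exists xs; split => // x0; elim=> [|k IH]; first by rewrite expr0 mul1r.
rewrite iterS; apply: le_trans (ptri hp _ (T xs) _) _.
rewrite fix0 addr0; apply: le_trans (Hc _ _) _.
by rewrite exprS -mulrA; apply: ler_wpM2l.
Qed.
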